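(* Let $B\in\mathbb R^{n\times m}$, $f:\mathbb R^m\to\mathbb R$, $h:\mathbb R^n\to\mathbb R$ differentiable, and $T_{\mathcal U},\mathcal I_{\mathcal V}$ ($m\times m$), $T_{\mathcal P},\mathcal I_{\mathcal Q}$ ($n\times n$) symmetric positive definite. Let $f_B(u)=f(u)+\frac12(B^\top T_{\mathcal P}^{-1}Bu,u)$, $h_B(p)=h(p)+\frac12(BT_{\mathcal U}^{-1}B^\top p,p)$, $e_{\mathcal U}(u)=u-T_{\mathcal U}^{-1}\nabla f(u)$, $e_{\mathcal P}(p)=p-T_{\mathcal P}^{-1}\nabla h(p)$, and $$\mathcal G^u(u,p)=-\mathcal I_{\mathcal V}^{-1}\big(\nabla f_B(u)+B^\top(p-T_{\mathcal P}^{-1}\nabla h(p))\big),\qquad \mathcal G^p(u,p)=-\mathcal I_{\mathcal Q}^{-1}\big(\nabla h_B(p)-B(u-T_{\mathcal U}^{-1}\nabla f(u))\big).$$ Assume $\nabla f_B$ and $\nabla h_B$ are Lipschitz with constants $L_{f_B,\mathcal I_{\mathcal V}}$, $L_{h_B,\mathcal I_{\mathcal Q}}$ (i.e. $\|\nabla f_B(u_1)-\nabla f_B(u_2)\|_{\mathcal I_{\mathcal V}^{-1}}\le L_{f_B,\mathcal I_{\mathcal V}}\|u_1-u_2\|_{\mathcal I_{\mathcal V}}$ and $\|\nabla h_B(p_1)-\nabla h_B(p_2)\|_{\mathcal I_{\mathcal Q}^{-1}}\le L_{h_B,\mathcal I_{\mathcal Q}}\|p_1-p_2\|_{\mathcal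 I_{\mathcal Q}}$), and let $L_{e_{\mathcal U},\mathcal I_{\mathcal V}}$, $L_{e_{\mathcal P},\mathcal I_{\mathcal Q}}$ be the Lipschitz constants of $e_{\mathcal U}$ in $\|\cdot\|_{\mathcal I_{\mathcal V}}$ and of $e_{\mathcal P}$ in $\|\cdot\|_{\mathcal I_{\mathcal Q}}$. Then for all $u_1,u_2\in\mathbb R^m$, $p_1,p_2\in\mathbb R^n$, $$\|\mathcal G^u(u_1,p_1)-\mathcal G^u(u_2,p_2)\|_{\mathcal I_{\mathcal V}}\le L_{f_B,\mathcal I_{\mathcal V}}\|u_1-u_2\|_{\mathcal I_{\mathcal V}}+L_SL_{e_{\mathcal P},\mathcal I_{\mathcal Q}}\|p_1-p_2\|_{\mathcal I_{\mathcal Q}},$$ $$\|\mathcal G^p(u_1,p_1)-\mathcal G^p(u_2,p_2)\|_{\mathcal I_{\mathcal Q}}\le L_{h_B,\mathcal I_{\mathcal Q}}\|p_1-p_2\|_{\mathcal I_{\mathcal Q}}+L_SL_{e_{\mathcal U},\mathcal I_{\mathcal V}}\|u_1-u_2\|_{\mathcal I_{\mathcal V}},$$ where $L_S^2=\lambda_{\max}(\mathcal I_{\mathcal Q}^{-1}B\mathcal I_{\mathcal V}^{-1}B^\top)$.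
   Context: For SPD $M$, $\|x\|_M=(Mx,x)^{1/2}$. *)

(* Defs.v *)
From HB Require Import structures.
From mathcomp Require Import all_boot all_order all_algebra.
From mathcomp Require Import all_classical all_reals all_analysis.
Set Implicit Arguments. Unset Strict Implicit. Unset Printing Implicit Defensive.
Import Order.TTheory GRing.Theory Num.Theory.
Import numFieldNormedType.Exports.
Local Open Scope ring_scope.

Section Defs.
Variable R : realType.

Definition qform (k : nat) (M : 'M[R]_k) (x : 'cV[R]_k) : R := (x^T *m (M *m x)) 0 0.

Definition mnorm (k : nat) (M : 'M[R]_k) (x : 'cV[R]_k) : R := Num.sqrt (qform M x).

Definition spd (k : nat) (M : 'M[R]_k) : Prop :=
  M^T = M /\ forall x : 'cV[R]_k, x != 0 -> 0 < qform M x.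

Definition is_gradient (k : nat) (f : 'cV[R]_k -> R) (g : 'cV[R]_k -> 'cV[R]_k) : Prop :=
  forall x, differentiable f x /\ forall v, ('d f x : 'cV[R]_k -> R) v = ((g x)^T *m v) 0 0.

Definition lipschitz_wrt (k l : nat) (M1 : 'M[R]_k) (M2 : 'M[R]_l)
  (phi : 'cV[R]_k -> 'cV[R]_l) (L : R) : Prop :=
  forall x1 x2, mnorm M2 (phi x1 - phi x2) <= L * mnorm M1 (x1 - x2).

Definition is_lambda_max (k : nat) (A : 'M[R]_k) (lam : R) : Prop :=
  eigenvalue A lam /\ forall a, eigenvalue A a -> a <= lam.

End Defs.

(* Main.v *)
Require Import Defs.
From HB Require Import structures.
From mathcomp Require Import all_boot all_order all_algebra.
From mathcomp Require Import all_classical all_reals all_analysis.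
From mathcomp Require Import ring lra.
Set Implicit Arguments. Unset Strict Implicit. Unset Printing Implicit Defensive.
Import Order.TTheory GRing.Theory Num.Theory.
Import numFieldNormedType.Exports.
Local Open Scope ring_scope.
Section H.
Variable R : realType.

Definition bil k (M : 'M[R]_k) (x y : 'cV[R]_k) : R := (x^T *m (M *m y)) 0 0.

Lemma qformE k (M : 'M[R]_k) x : qform M x = bil M x x.
Proof. by []. Qed.

Lemma bilDl k (M : 'M[R]_k) x y z : bil M (x + y) z = bil M x z + bil M y z.
Proof. by rewrite /bil linearD /= mulmxDl mxE. Qed.

Lemma bilDr k (M : 'M[R]_k) x y z : bil M x (y + z) = bil M x y + bil M x z.
Proof. by rewrite /bil !mulmxDr mxE. Qed.

Lemma bilZl k (M : 'M[R]_k) a x y : bil M (a *: x) y = a * bil M x y.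
Proof. by rewrite /bil linearZ /= -scalemxAl mxE. Qed.

Lemma bilZr k (M : 'M[R]_k) a x y : bil M x (a *: y) = a * bil M x y.
Proof. by rewrite /bil -!scalemxAr mxE. Qed.

Lemma bil_sym k (M : 'M[R]_k) x y : M^T = M -> bil M x y = bil M y x.
Proof.
move=> sM; rewrite /bil.
have -> : (x^T *m (M *m y)) 0 0 = ((x^T *m (M *m y))^T) 0 0 by rewrite [in RHS]mxE.
by rewrite !trmx_mul trmxK sM mulmxA.
Qed.

Lemma bil0r k (M : 'M[R]_k) x : bil M x 0 = 0.
Proof. by rewrite -(scale0r 0) bilZr mul0r. Qed.

Lemma bil0l k (M : 'M[R]_k) x : bil M 0 x = 0.
Proof. by rewrite -(scale0r 0) bilZl mul0r. Qed.

Lemma qform_add_t k (M : 'M[R]_k) x y t : M^T = M ->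
  qform M (x + t *: y) = qform M x + 2 * t * bil M y x + t ^+ 2 * qform M y.
Proof.
move=> sM; rewrite !qformE !bilDl !bilDr !bilZl !bilZr (bil_sym x y sM).
ring.
Qed.

Lemma qformN k (M : 'M[R]_k) x : qform M (- x) = qform M x.
Proof. by rewrite /qform linearN /= !mulmxN mulNmx opprK. Qed.

Lemma qform0 k (M : 'M[R]_k) : qform M 0 = 0.
Proof. by rewrite qformE bil0l. Qed.

Lemma spd_ge0 k (M : 'M[R]_k) x : spd M -> 0 <= qform M x.
Proof.
move=> [_ pM]; have [->|nx] := eqVneq x 0; first by rewrite qform0.
exact/ltW/pM.
Qed.

Lemma spd_unit k (M : 'M[R]_k) : spd M -> M \in unitmx.
Proof.
move=> [sM pM]; rewrite -row_free_unit -kermx_eq0; apply/negP => /negP nz.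
pose v := nz_row (kermx M).
have vn : v != 0 by rewrite nz_row_eq0.
have vM : v *m M = 0 by apply/sub_kermxP; exact: nz_row_sub.
have : 0 < qform M v^T by apply: pM; rewrite trmx_eq0.
rewrite /qform trmxK -{1}sM -trmx_mul vM trmx0 mulmx0 mxE ltxx //.
Qed.

Lemma qform_mul k l (M : 'M[R]_k) (P : 'M[R]_(k, l)) d :
  qform M (P *m d) = qform (P^T *m M *m P) d.
Proof. by rewrite /qform trmx_mul !mulmxA. Qed.

Lemma CS k (M : 'M[R]_k) x y : spd M -> bil M x y ^+ 2 <= qform M x * qform M y.
Proof.
move=> hM; have sM := hM.1.
have [->|ny] := eqVneq y 0; first by rewrite bil0r qform0 expr0n /= mulr0.
have c0 : 0 < qform M y by apply: hM.2.
pose b := bil M x y; pose a := qform M x; pose c := qform M y.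
have := spd_ge0 (x + (- b / c) *: y) hM.
rewrite qform_add_t // (bil_sym y x sM) -/b -/a -/c => h.
have cn : c != 0 by rewrite gt_eqF.
have e : a + 2 * (- b / c) * b + (- b / c) ^+ 2 * c = a - b ^+ 2 / c.
  by field.
rewrite e subr_ge0 ler_pdivrMr // in h.
Qed.

Lemma mnorm_ge0 k (M : 'M[R]_k) x : 0 <= mnorm M x.
Proof. exact: sqrtr_ge0. Qed.

Lemma mnormN k (M : 'M[R]_k) x : mnorm M (- x) = mnorm M x.
Proof. by rewrite /mnorm qformN. Qed.

Lemma mnorm_tri k (M : 'M[R]_k) x y : spd M ->
  mnorm M (x + y) <= mnorm M x + mnorm M y.
Proof.
move=> hM; rewrite /mnorm.
have ha := spd_ge0 x hM; have hc := spd_ge0 y hM.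
have -> : qform M (x + y) = qform M x + 2 * bil M y x + qform M y.
  by have := qform_add_t x y 1 hM.1; rewrite scale1r mulr1 expr1n mul1r.
have s0 : 0 <= Num.sqrt (qform M x) + Num.sqrt (qform M y) by rewrite addr_ge0 ?sqrtr_ge0.
rewrite -(ger0_norm s0) -sqrtr_sqr ler_sqrt ?sqr_ge0 //.
rewrite sqrrD !sqr_sqrtr // lerD2r lerD2l -mulr_natl.
have hb : bil M y x <= Num.sqrt (qform M x) * Num.sqrt (qform M y).
  rewrite -sqrtrM // (le_trans (ler_norm _)) // -(sqrtr_sqr (bil M y x)) ler_sqrt ?mulr_ge0 //.
  by rewrite (bil_sym y x hM.1) CS.
lra.
Qed.

End H.
Section H2.
Variable R : realType.

Lemma cont_sum (T : topologicalType) (I : Type) (r : seq I) (F : I -> T -> R) :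
  (forall i, continuous (F i)) -> continuous (fun x => \sum_(i <- r) F i x).
Proof.
move=> h; elim: r => [|a r IH].
  rewrite (_ : (fun x => _) = fun=> 0); first exact: cst_continuous.
  by apply: funext => x; rewrite big_nil.
rewrite (_ : (fun x => _) = F a + (fun x => \sum_(i <- r) F i x)); last first.
  by apply: funext => x; rewrite big_cons.
by move=> x; apply: continuousD; [exact: h|exact: IH].
Qed.

Lemma qcont k (K : 'M[R]_k) : continuous (fun v : 'rV[R]_k => qform K v^T).
Proof.
rewrite (_ : (fun v => _) = fun v : 'rV[R]_k => \sum_i (v 0 i * \sum_j (K i j * v 0 j))).
  apply: cont_sum => i v.
  apply: (@continuousM _ _ (fun v : 'rV[R]_k => v 0 i)); first exact: coord_continuous.
  apply: cont_sum => j w.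
  apply: (@continuousM _ _ (fun=> K i j) (fun v : 'rV[R]_k => v 0 j)).
    exact: cst_continuous.
  exact: coord_continuous.
apply: funext => v; rewrite /qform trmxK [LHS]mxE; apply: eq_bigr => i _.
congr (_ * _); rewrite [LHS]mxE; apply: eq_bigr => j _; by rewrite mxE.
Qed.

Lemma qformZ k (M : 'M[R]_k) a x : qform M (a *: x) = a ^+ 2 * qform M x.
Proof. by rewrite !qformE bilZl bilZr mulrA expr2. Qed.

Lemma bilMB k (M K : 'M[R]_k) a x y :
  bil (a *: M - K) x y = a * bil M x y - bil K x y.
Proof.
rewrite /bil mulmxBl -scalemxAl mulmxBr -scalemxAr.
set P := _ *m (M *m y); set Q := _ *m (K *m y).
by rewrite !mxE.
Qed.

Lemma rayleigh k (M K : 'M[R]_k) : (0 < k)%N -> spd M -> K^T = K ->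
  exists S, (forall y, qform K y <= S * qform M y) /\
            exists2 x : 'cV[R]_k, x != 0 & K *m x = S *: (M *m x).
Proof.
move=> k0 hM sK.
pose g (v : 'rV[R]_k) := qform K v^T / qform M v^T.
pose A := [set v : 'rV[R]_k | `|v| = 1]%classic.
have qMpos : forall v : 'rV[R]_k, v != 0 -> 0 < qform M v^T.
  by move=> v nv; apply: hM.2; rewrite trmx_eq0.
have A0 : (A !=set0)%classic.
  pose v0 : 'rV[R]_k := const_mx 1.
  have nv0 : v0 != 0.
    apply/eqP => /matrixP /(_ 0 (Ordinal k0)); rewrite !mxE => /eqP.
    by rewrite oner_eq0.
  exists (`|v0|^-1 *: v0); rewrite /A /=; apply: normrZV.
  by rewrite unitfE normr_eq0.
have cA : compact A.
  apply: bounded_closed_compact.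
    rewrite /= /bounded_near. near=> M0 => v /= ->; near: M0.
    by apply: nbhs_pinfty_ge; rewrite num_real.
  have := (continuous_closedP (Num.norm : 'rV[R]_k -> R)).1 (@norm_continuous _ _) [set x | x = 1]%classic (@closed_eq R 1).
  exact.
have cg : {within A, continuous g}%classic.
  apply: continuous_in_subspaceT => v; rewrite inE /A /= => v1.
  have nv : v != 0 by apply/eqP => v0; move: v1; rewrite v0 normr0 => /eqP; rewrite eq_sym oner_eq0.
  apply: (@continuousM _ _ (fun v : 'rV[R]_k => qform K v^T)); first exact: qcont.
  apply: (@continuousV _ _ (fun v : 'rV[R]_k => qform M v^T)).
    by rewrite gt_eqF // qMpos.
  exact: qcont.
have [c cA' cmax] := compact_EVT_max A0 cA cg.
set S := g c.
have cn : c != 0.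
  apply/eqP => c0; move: cA'; rewrite inE /A /= c0 normr0 => /eqP.
  by rewrite eq_sym oner_eq0.
have bound : forall y, qform K y <= S * qform M y.
  move=> y; have [->|ny] := eqVneq y 0; first by rewrite !qform0 mulr0.
  have yT : y^T != 0 by rewrite trmx_eq0.
  have vA : `|y^T|^-1 *: y^T \in A.
    by rewrite inE /A /=; apply: normrZV; rewrite unitfE normr_eq0.
  have := cmax _ vA; rewrite /g linearZ /= trmxK !qformZ.
  have qy : 0 < qform M y by apply: hM.2.
  have an : `|y^T|^-1 ^+ 2 != 0 :> R by rewrite expf_eq0 /= invr_eq0 normr_eq0.
  have -> : `|y^T|^-1 ^+ 2 * qform K y / (`|y^T|^-1 ^+ 2 * qform M y)
            = qform K y / qform M y.
    by field; rewrite gt_eqF // normr_eq0 yT.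
  by move=> h; rewrite -ler_pdivrMr.
exists S; split => //; exists c^T; first by rewrite trmx_eq0.
have eqS : qform K c^T = S * qform M c^T.
  by rewrite /S /g divfK // gt_eqF // qMpos.
set x := c^T.
pose C := S *: M - K.
have sC : C^T = C by rewrite /C linearB linearZ /= sK hM.1.
have C0 : forall z, 0 <= qform C z.
  by move=> z; rewrite qformE bilMB -!qformE subr_ge0; exact: bound.
have Cx : qform C x = 0 by rewrite qformE bilMB -!qformE eqS subrr.
have hb : forall y, bil C y x = 0.
  move=> y; set b := bil C y x; set cc := qform C y.
  have cc0 : 0 <= cc := C0 y.
  have := C0 (x + (- b / (cc + 1)) *: y); rewrite qform_add_t // Cx add0r -/b -/cc.
  have c1 : cc + 1 != 0 by rewrite gt_eqF // ltr_wpDl.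
  have -> : 2 * (- b / (cc + 1)) * b + (- b / (cc + 1)) ^+ 2 * cc
            = - (b ^+ 2 * (cc + 2)) / (cc + 1) ^+ 2.
    by field.
  rewrite pmulr_lge0 ?invr_gt0 ?exprn_gt0 ?ltr_wpDl // oppr_ge0 => hP.
  nra.
have Cx0 : C *m x = 0.
  apply/matrixP => i j; rewrite ord1.
  have := hb (delta_mx i 0); rewrite /bil trmx_delta -rowE mxE => ->.
  by rewrite mxE.
move: Cx0; rewrite /C mulmxBl -scalemxAl => /eqP; rewrite subr_eq0 => /eqP.
by move=> ->.
Unshelve. all: by end_near.
Qed.

End H2.
Section H3.
Variable R : realType.

Lemma key k (M K : 'M[R]_k) lam : spd M -> K^T = K -> 0 <= lam ->
  (forall a (x : 'cV[R]_k), x != 0 -> K *m x = a *: (M *m x) -> a <= lam) ->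
  forall y, qform K y <= lam * qform M y.
Proof.
move=> hM sK l0 hl y; have [k0|kp] := posnP k.
  by subst k; rewrite (flatmx0 y) !qform0 mulr0.
have [S [hS [x nx hx]]] := rayleigh kp hM sK.
apply: (le_trans (hS y)); apply: ler_wpM2r; [exact: spd_ge0 | exact: hl hx].
Qed.

Lemma colEigen k (A : 'M[R]_k) a (w : 'cV[R]_k) :
  A *m w = a *: w -> w != 0 -> eigenvalue A a.
Proof.
move=> hw nw; rewrite /eigenvalue /eigenspace kermx_eq0 row_free_unit.
apply/negP => u.
have : (A - a%:M) *m w = 0 by rewrite mulmxBl hw mul_scalar_mx subrr.
move=> /(congr1 (mulmx (invmx (A - a%:M)))); rewrite mulKmx // mulmx0 => w0.
by rewrite w0 eqxx in nw.
Qed.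

Lemma sublem (V : zmodType) (a1 a2 b1 b2 : V) :
  -(a1 + b1) - -(a2 + b2) = -(a1 - a2) + -(b1 - b2).
Proof. by rewrite opprK !opprB !opprD addrACA (addrC a2) (addrC b2). Qed.

Lemma sublem2 (V : zmodType) (a1 a2 b1 b2 : V) :
  -(a1 + - b1) - -(a2 + - b2) = -(a1 - a2) + (b1 - b2).
Proof. by rewrite sublem; congr (_ + _); rewrite opprB opprK addrC. Qed.

End H3.
Unset Implicit Arguments. Set Strict Implicit.
Theorem lemma5p4 (R : realType) (m n : nat) (B : 'M[R]_(n, m))
  (TU IV : 'M[R]_m) (TP IQ : 'M[R]_n)
  (f : 'cV[R]_m -> R) (h : 'cV[R]_n -> R)
  (gf : 'cV[R]_m -> 'cV[R]_m) (gh : 'cV[R]_n -> 'cV[R]_n)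
  (gfB : 'cV[R]_m -> 'cV[R]_m) (ghB : 'cV[R]_n -> 'cV[R]_n)
  (LfB LhB LeU LeP LS : R) :
  spd TU -> spd IV -> spd TP -> spd IQ ->
  is_gradient f gf -> is_gradient h gh ->
  (* f_B(u) = f(u) + 1/2 (B^T T_P^{-1} B u, u), gfB its gradient *)
  is_gradient (fun u => f u + 2^-1 * qform (B^T *m invmx TP *m B) u) gfB ->
  (* h_B(p) = h(p) + 1/2 (B T_U^{-1} B^T p, p), ghB its gradient *)
  is_gradient (fun p => h p + 2^-1 * qform (B *m invmx TU *m B^T) p) ghB ->
  lipschitz_wrt IV (invmx IV) gfB LfB ->
  lipschitz_wrt IQ (invmx IQ) ghB LhB ->
  lipschitz_wrt IV IV (fun u => u - invmx TU *m gf u) LeU ->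
  lipschitz_wrt IQ IQ (fun p => p - invmx TP *m gh p) LeP ->
  0 <= LS -> is_lambda_max (invmx IQ *m B *m invmx IV *m B^T) (LS ^+ 2) ->
  let Gu := fun u p => - (invmx IV *m (gfB u + B^T *m (p - invmx TP *m gh p))) in
  let Gp := fun u p => - (invmx IQ *m (ghB p - B *m (u - invmx TU *m gf u))) in
  forall (u1 u2 : 'cV[R]_m) (p1 p2 : 'cV[R]_n),
    mnorm IV (Gu u1 p1 - Gu u2 p2)
      <= LfB * mnorm IV (u1 - u2) + LS * LeP * mnorm IQ (p1 - p2) /\
    mnorm IQ (Gp u1 p1 - Gp u2 p2)
      <= LhB * mnorm IQ (p1 - p2) + LS * LeU * mnorm IV (u1 - u2).
Proof.
move=> hTU hIV hTP hIQ _ _ _ _ LfBh LhBh LeUh LePh LS0 [eigA maxA] Gu Gp u1 u2 p1 p2.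
have uIV := spd_unit hIV; have uIQ := spd_unit hIQ.
have invsym : forall k (M : 'M[R]_k), spd M -> (invmx M)^T = invmx M.
  by move=> k M hM; rewrite trmx_inv hM.1.
have mninv : forall k (M : 'M[R]_k) w, spd M -> mnorm M (invmx M *m w) = mnorm (invmx M) w.
  move=> k M w hM; rewrite /mnorm qform_mul invsym // mulVmx ?spd_unit // mul1mx //.
have sqLS := sqr_ge0 LS.
split.
- have eGu : forall u p, Gu u p = -(invmx IV *m gfB u
                 + (invmx IV *m B^T) *m (p - invmx TP *m gh p)).
    by move=> u p; rewrite /Gu mulmxDr mulmxA.
  rewrite !eGu sublem -!mulmxBr.
  apply: le_trans (mnorm_tri _ _ hIV) _; rewrite !mnormN; apply: lerD.
    by rewrite mninv //; exact: LfBh.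
  set d := _ - _.
  have h1 : mnorm IV ((invmx IV *m B^T) *m d) <= LS * mnorm IQ d.
    have EK : (invmx IV *m B^T)^T *m IV *m (invmx IV *m B^T) = B *m invmx IV *m B^T.
      by rewrite trmx_mul trmxK invsym // -!mulmxA mulKmx.
    have symK : (B *m invmx IV *m B^T)^T = B *m invmx IV *m B^T.
      by rewrite !trmx_mul trmxK invsym // mulmxA.
    rewrite /mnorm qform_mul EK -(ger0_norm LS0) -sqrtr_sqr -sqrtrM //.
    rewrite ler_sqrt ?mulr_ge0 ?spd_ge0 //.
    apply: (key hIQ symK sqLS) => a x nx hx.
    apply: maxA; apply: (colEigen (w := x)) => //.
    move: hx; rewrite -!mulmxA => ->.
    by rewrite -scalemxAr mulKmx.
  rewrite -mulrA; apply: (le_trans h1); apply: ler_wpM2l => //.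
  exact: LePh.
- have eGp : forall u p, Gp u p = -(invmx IQ *m ghB p
                 + - ((invmx IQ *m B) *m (u - invmx TU *m gf u))).
    by move=> u p; rewrite /Gp mulmxBr mulmxA.
  rewrite !eGp sublem2 -!mulmxBr.
  apply: le_trans (mnorm_tri _ _ hIQ) _; rewrite !mnormN; apply: lerD.
    by rewrite mninv //; exact: LhBh.
  set d := _ - _.
  have h1 : mnorm IQ ((invmx IQ *m B) *m d) <= LS * mnorm IV d.
    have EK : (invmx IQ *m B)^T *m IQ *m (invmx IQ *m B) = B^T *m invmx IQ *m B.
      by rewrite trmx_mul invsym // -!mulmxA mulKmx.
    have symK : (B^T *m invmx IQ *m B)^T = B^T *m invmx IQ *m B.
      by rewrite !trmx_mul trmxK invsym // mulmxA.
    rewrite /mnorm qform_mul EK -(ger0_norm LS0) -sqrtr_sqr -sqrtrM //.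
    rewrite ler_sqrt ?mulr_ge0 ?spd_ge0 //.
    apply: (key hIV symK sqLS) => a x nx hx.
    have [a0|a0] := lerP a 0; first exact: le_trans a0 sqLS.
    apply: maxA; apply: (colEigen (w := invmx IQ *m B *m x)).
      rewrite -!mulmxA; move: hx; rewrite -!mulmxA => ->.
      by rewrite -!scalemxAr mulKmx.
    apply/eqP => w0.
    have w0' : invmx IQ *m (B *m x) = 0 by rewrite mulmxA.
    have : a *: (IV *m x) = 0 by rewrite -hx -!mulmxA w0' mulmx0.
    move/eqP; rewrite scalemx_eq0 gt_eqF //= => /eqP IVx.
    have : x = 0 by rewrite -(mulKmx uIV x) IVx mulmx0.
    by move/eqP; rewrite (negbTE nx).
  rewrite -mulrA; apply: (le_trans h1); apply: ler_wpM2l => //.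
  exact: LeUh.
Qed.
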